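(* Let $\mathbf f=(M,\mathscr L,\lambda,\kappa,\theta,\Omega)$ be an additive frame. Then $\mathbf f$ is an additive$^+$ frame (i.e. $|M|\ge\lambda$) if and only if for each $\varepsilon\in(0,\theta)$ there exists $\bar a\in{}^\varepsilon M$ such that $\varphi_{\bar a}(M)$ has cardinality $\ge\lambda$.
   Context: A general frame is a tuple $\mathbf f=(M,\mathscr L,\lambda,\kappa,\theta,\Omega)$ where: (1) $M$ is a $\tau_M$-model; (2) $\mathscr L$ is a class of infinitary formulas in vocabulary $\tau_M$ (built using conjunctions, disjunctions and quantifiers $\exists^\sigma,\forall^\sigma$, $\sigma\in\Omega$, where $\exists^\sigma\bar x'$ asserts existence of $\sigma$ pairwise distinct witnesses), each of the form $\varphi(\bar x)$ with $\lg(\bar x)<\theta$, and $\mathscr L$ is closed under permuting variables, adding dummy variables and finite conjunctions; for such $\varphi$, $\varphi(M)=\{\bar a: M\models\varphi[\bar a]\}$; (3) for every $\varepsilon<\theta$ and $\bar a\in{}^\varepsilon M$ there is $\varphi_{\bar a}(\bar x)\in\mathscr L$ with $\bar a\in\varphi_{\bar a}(M)$ and $\varphi_{\bar a}(M)\subseteq\psi(M)$ whenever $\psi(\bar x)\in\mathscr L$ and $\bar a\in\psi(M)$; (4)(a) if $\varphi_\alpha(\bar x)\in\mathscr L$ for $\alpha<\kappa$ then $\varphi_\alpha(M)\supseteq\varphi_\beta(M)$ for some $\alpha<\beta<\kappa$; (4)(b) if $\varphi_{\alpha,\beta}(\bar x,\bar y)\in\mathscr L$ for $\alpha<\beta<\lambda$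 then there are $\alpha_1<\alpha_2<\alpha_3<\lambda$ with $\varphi_{\alpha_1,\alpha_2}(M)\supseteq\varphi_{\alpha_1,\alpha_3}(M)$ and $\varphi_{\alpha_1,\alpha_2}(M)\supseteq\varphi_{\alpha_2,\alpha_3}(M)$; (5) $\lambda,\kappa$ are regular, $\lambda\ge\kappa\ge\theta\ge|\Omega|+|\tau_M|$, and $\Omega$ is a set of cardinals with $1\in\Omega$, all other members infinite. It is an additive frame if moreover (6) $M$ is an additive $\theta$-model ($+,-,0\in\tau_M$, $(|M|,+,-,0)$ an abelian group, predicates interpreted as subgroups of powers of $M$, function symbols as homomorphisms, $|\tau_M|\le\theta$) and (7) for every $\varphi(\bar x_u)\in\mathscr L$, $\varphi(M)$ is a subgroup of ${}^uM$. An additive frame is additive$^+$ if $|M|\ge\lambda$. *)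

(* Defs.v *)
From HB Require Import structures.
From mathcomp Require Import all_boot all_order all_algebra.
From mathcomp Require Import boolp classical_sets cardinality.
Set Implicit Arguments. Unset Strict Implicit. Unset Printing Implicit Defensive.
Import GRing.Theory.
Local Open Scope classical_set_scope.
Local Open Scope card_scope.
Local Open Scope ring_scope.

(* Cardinals, represented as initial ordinals: a type with a strict    *)
(* well-order all of whose proper initial segments have strictly      *)
(* smaller cardinality.                                                *)
Record cardinal := Cardinal {
  ord_carrier :> Type;
  olt : ord_carrier -> ord_carrier -> Prop;
  olt_irr : forall x, ~ olt x x;
  olt_trans : forall x y z, olt x y -> olt y z -> olt x z;
  olt_total : forall x y, olt x y \/ x = y \/ olt y x;
  olt_wf : well_founded olt;
  olt_initial : forall x : ord_carrier,
      ~ ([set: ord_carrier] #<= [set y | olt y x])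
}.

(* the ordinal  eps < theta  viewed as the set of its predecessors *)
Definition seg (c : cardinal) (e : c) := {d : c | olt d e}.

Definition regular (c : cardinal) : Prop :=
  infinite_set [set: (c : Type)] /\
  forall S : set c, ~ ([set: (c : Type)] #<= S) ->
    exists x : c, forall y, S y -> olt y x.

Definition card_ge (c d : cardinal) : Prop := [set: (d : Type)] #<= [set: (c : Type)].

(* Vocabulary tau_M of an additive model: the symbols + , - , 0 are    *)
(* built in; further function symbols and predicate symbols with       *)
(* (arbitrary) arities.                                                *)
Record vocab := Vocab {
  fsym : Type; farity : fsym -> Type;
  psym : Type; parity : psym -> Type
}.

(* Omega: a set of cardinals, given as a family indexed by qind *)
Record quants := Quants { qind : Type; qcard : qind -> Type }.

Section Syntax.
Variables (tau : vocab) (Om : quants).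

Inductive term (V : Type) : Type :=
  | tvar : V -> term V
  | tzero : term V
  | tadd : term V -> term V -> term V
  | topp : term V -> term V
  | tapp : forall f : fsym tau, (farity f -> term V) -> term V.

Local Unset Implicit Arguments.
Inductive iform : Type -> Type :=
  | feq : forall V, term V -> term V -> iform V
  | fpred : forall V (p : psym tau), (parity p -> term V) -> iform V
  | fconj : forall V (I : Type), (I -> iform V) -> iform V
  | fdisj : forall V (I : Type), (I -> iform V) -> iform V
  (* exists^sigma xbar' / forall^sigma xbar', sigma in Omega,  xbar' indexed by W *)
  | fex : forall V (s : qind Om) (W : Type), iform (V + W) -> iform V
  | fall : forall V (s : qind Om) (W : Type), iform (V + W) -> iform V.

Local Set Implicit Arguments.
Definition join (M V W : Type) (v : V -> M) (w : W -> M) : V + W -> M :=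
  fun x => match x with inl a => v a | inr b => w b end.

Variables (M : zmodType)
  (fI : forall f : fsym tau, (farity f -> M) -> M)
  (pI : forall p : psym tau, set (parity p -> M)).

Fixpoint teval (V : Type) (v : V -> M) (t : term V) : M :=
  match t with
  | tvar x => v x
  | tzero => 0
  | tadd t1 t2 => teval v t1 + teval v t2
  | topp t1 => - teval v t1
  | tapp f ts => fI (fun i => teval v (ts i))
  end.

(* phi(M) = set of assignments satisfying phi.                          *)
(* exists^sigma : there are sigma pairwise distinct witnesses;          *)
(* forall^sigma : its dual, fewer than sigma tuples fail.               *)
Fixpoint sat (V : Type) (phi : iform V) : set (V -> M) :=
  match phi in iform V return set (V -> M) with
  | feq _ t1 t2 => [set v | teval v t1 = teval v t2]
  | fpred _ p ts => [set v | pI (fun i => teval v (ts i))]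
  | fconj _ J fs => [set v | forall i, sat (fs i) v]
  | fdisj _ J fs => [set v | exists i, sat (fs i) v]
  | fex _ s W psi =>
      [set v | [set: qcard s] #<= [set w : W -> M | sat psi (join v w)]]
  | fall _ s W psi =>
      [set v | ~ ([set: qcard s] #<= [set w : W -> M | ~ sat psi (join v w)])]
  end.

Fixpoint trename (V U : Type) (r : V -> U) (t : term V) : term U :=
  match t with
  | tvar x => tvar (r x)
  | tzero => tzero U
  | tadd t1 t2 => tadd (trename r t1) (trename r t2)
  | topp t1 => topp (trename r t1)
  | tapp f ts => tapp (fun i => trename r (ts i))
  end.

Definition sum_map (V U W : Type) (r : V -> U) (x : V + W) : U + W :=
  match x with inl a => inl (r a) | inr b => inr b end.

Fixpoint frename (V : Type) (phi : iform V) : forall U : Type, (V -> U) -> iform U :=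
  match phi in iform V return forall U : Type, (V -> U) -> iform U with
  | feq _ t1 t2 => fun U r => feq _ (trename r t1) (trename r t2)
  | fpred _ p ts => fun U r => fpred _ p (fun i => trename r (ts i))
  | fconj _ J fs => fun U r => fconj _ J (fun i => frename (fs i) r)
  | fdisj _ J fs => fun U r => fdisj _ J (fun i => frename (fs i) r)
  | fex _ s W psi => fun U r => fex _ s _ (frename psi (@sum_map _ _ W r))
  | fall _ s W psi => fun U r => fall _ s _ (frename psi (@sum_map _ _ W r))
  end.

Definition fand (V : Type) (phi psi : iform V) : iform V :=
  fconj _ bool (fun b : bool => if b then phi else psi).

End Syntax.

Record frame := Frame {
  fr_tau : vocab;
  fr_M : zmodType;
  fr_fI : forall f : fsym fr_tau, (farity f -> fr_M) -> fr_M;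
  fr_pI : forall p : psym fr_tau, set (parity p -> fr_M);
  fr_lam : cardinal;
  fr_kap : cardinal;
  fr_the : cardinal;
  fr_Om : quants;
  (* L: for each eps < theta, the formulas of L whose free variables    *)
  (* are x_delta, delta < eps                                           *)
  fr_L : forall e : fr_the, set (iform fr_tau fr_Om (seg e))
}.

Arguments fr_fI : clear implicits.
Arguments fr_pI : clear implicits.
Arguments fr_L : clear implicits.

Section FrameDefs.
Variable fr : frame.
Local Notation M := (fr_M fr).
Local Notation L := (fr_L fr _).
Local Notation th := (fr_the fr).
Definition fsat (V : Type) (phi : iform (fr_tau fr) (fr_Om fr) V) : set (V -> M) :=
  sat (fr_fI fr) (fr_pI fr) phi.

(* phi is a valid choice of phi_abar (clause (3)) *)
Definition is_phi_a (e : th) (a : seg e -> M)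
    (phi : iform (fr_tau fr) (fr_Om fr) (seg e)) : Prop :=
  L phi /\ fsat phi a /\
  forall psi, L psi -> fsat psi a -> fsat phi `<=` fsat psi.

(* |tau_M|: the extra symbols + , - , 0 together with fsym and psym *)
Definition tau_card_type : Type := (fsym (fr_tau fr) + psym (fr_tau fr) + 'I_3)%type.

Definition general_frame : Prop :=
  (* (2) closure: renaming by injections (= permuting variables and     *)
  (*     adding dummy variables) and finite conjunctions                *)
  (forall (e e' : th) (r : seg e -> seg e') phi,
      injective r -> L phi -> L (frename phi r)) /\
  (forall (e : th) (phi psi : iform _ _ (seg e)), L phi -> L psi -> L (fand phi psi)) /\
  (* (3) *)
  (forall (e : th) (a : seg e -> M), exists phi, is_phi_a a phi) /\
  (forall (e : th) (phi : fr_kap fr -> iform _ _ (seg e)),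
      (forall al, L (phi al)) ->
      exists al be, olt al be /\ fsat (phi be) `<=` fsat (phi al)) /\
  (* (4)(b) *)
  (forall (e : th) (phi : fr_lam fr -> fr_lam fr -> iform _ _ (seg e)),
      (forall al be, olt al be -> L (phi al be)) ->
      exists a1 a2 a3, olt a1 a2 /\ olt a2 a3 /\
        fsat (phi a1 a3) `<=` fsat (phi a1 a2) /\
        fsat (phi a2 a3) `<=` fsat (phi a1 a2)) /\
  regular (fr_lam fr) /\ regular (fr_kap fr) /\
  card_ge (fr_lam fr) (fr_kap fr) /\ card_ge (fr_kap fr) th /\
  [set: (qind (fr_Om fr) + tau_card_type)%type] #<= [set: (th : Type)] /\
  (* Omega is a set of cardinals (distinct indices = distinct cardinals), *)
  (* 1 in Omega, all other members infinite                               *)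
  (forall i j : qind (fr_Om fr), [set: qcard i] #= [set: qcard j] -> i = j) /\
  (exists i : qind (fr_Om fr), [set: qcard i] #= [set: unit]) /\
  (forall i : qind (fr_Om fr),
      [set: qcard i] #= [set: unit] \/ infinite_set [set: qcard i]).

Definition additive_frame : Prop :=
  general_frame /\
  (forall (f : fsym (fr_tau fr)) (x y : farity f -> M),
      fr_fI fr f (fun i => x i - y i) = fr_fI fr f x - fr_fI fr f y) /\
  (forall p : psym (fr_tau fr),
      fr_pI fr p (fun _ => 0) /\
      forall x y, fr_pI fr p x -> fr_pI fr p y -> fr_pI fr p (fun i => x i - y i)) /\
  [set: tau_card_type] #<= [set: (th : Type)] /\
  (forall (e : th) (phi : iform _ _ (seg e)), L phi ->
      fsat phi (fun _ => 0) /\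
      forall x y, fsat phi x -> fsat phi y -> fsat phi (fun i => x i - y i)).

Definition additive_plus_frame : Prop :=
  additive_frame /\ [set: (fr_lam fr : Type)] #<= [set: (M : Type)].

End FrameDefs.

(* Main.v *)
Require Import Defs.
From HB Require Import structures.
From mathcomp Require Import all_boot all_order all_algebra.
From mathcomp Require Import boolp classical_sets cardinality.
From Stdlib Require Import ClassicalEpsilon.
Local Open Scope classical_set_scope.
Local Open Scope card_scope.

Lemma le_of_fun T U (A : set T) (B : set U) (f : T -> U) :
  (forall x, A x -> B (f x)) -> (forall x y, A x -> A y -> f x = f y -> x = y) ->
  A #<= B.
Proof.
move=> hf hinj; apply/card_leP; apply/injfunPex.
exists (fun x : A => SigSub (mem_set (hf _ (set_mem (valP x))))) => //.
move=> [x hx] [y hy] _ _ /(congr1 val) /= exy.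
apply/val_inj => /=; apply: hinj => //; exact: set_mem.
Qed.

Lemma le_to_fun T U (B : set U) : [set: T] #<= B ->
  exists f : T -> U, (forall x, B (f x)) /\ injective f.
Proof.
move/card_leP/injfunPex => [g _ ginj].
exists (fun x => val (g (SigSub (mem_set (I : [set: T] x))))); split.
  by move=> x; apply: set_mem; apply: valP.
move=> x y /val_inj /ginj H.
have := H (mem_set I) (mem_set I).
by move/(congr1 val).
Qed.

Lemma min_ex (c : cardinal) (P : c -> Prop) x : P x ->
  exists m, P m /\ forall y, olt y m -> ~ P y.
Proof.
elim/(well_founded_ind (@olt_wf c)): x => x IH Px.
case: (pselect (exists y, olt y x /\ P y)) => [[y [yx Py]]|N].
  exact: IH yx Py.
by exists x; split=> // y yx Py; apply: N; exists y.
Qed.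

Lemma union_small (c : cardinal) (T : Type) (I : set c) (F : c -> set T) :
  regular c -> ~ ([set: c] #<= I) -> (forall i, I i -> ~ ([set: c] #<= F i)) ->
  ~ ([set: c] #<= [set t | exists2 i, I i & F i t]).
Proof.
move=> [_ reg] hI hF /le_to_fun [g [gU ginj]].
have hb : forall i, I i -> exists x, forall y, F i (g y) -> olt y x.
  move=> i Ii; apply: reg => H; apply: (hF i Ii); apply: card_le_trans H _.
  apply: (@le_of_fun _ _ _ _ g) => // x y _ _; exact: ginj.
have : forall i, exists x, I i -> forall y, F i (g y) -> olt y x.
  move=> i; case: (pselect (I i)) => Ii.
    by have [x hx] := hb i Ii; exists x => _; exact hx.
  by exists i => /Ii.
case/choice => xb hxb.
have hX : ~ ([set: c] #<= xb @` I).
  by move=> H; apply: hI; exact: card_le_trans H (card_image_le _ _).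
have [z hz] := reg _ hX.
have [i Ii Fi] := gU z.
have lt1 := hxb i Ii z Fi.
have lt2 : olt (xb i) z by apply: hz; exists i.
exact: olt_irr (olt_trans lt1 lt2).
Qed.

Theorem lemma3p3 (fr : frame) :
  additive_frame fr ->
  (additive_plus_frame fr <->
   forall e : fr_the fr, (exists d : fr_the fr, olt d e) ->
     exists (a : seg e -> fr_M fr) (phi : iform (fr_tau fr) (fr_Om fr) (seg e)),
       is_phi_a a phi /\ [set: (fr_lam fr : Type)] #<= fsat phi).
Proof.
move=> Hadd; split.
- move=> [_ HM] e [d0 d0e]; apply: NNPP => Hneg.
  have Hsmall : forall (a : seg e -> fr_M fr) (phi : iform (fr_tau fr) (fr_Om fr) (seg e)), is_phi_a a phi -> ~ ([set: fr_lam fr] #<= fsat phi).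
    move=> a phi H1 H2; by apply: Hneg; exists a, phi.
  have [[_ [_ [H3 [_ [H4b [Hreg _]]]]]] _] := Hadd.
  have [Phi HPhi] := choice _ (H3 e).
  pose c (m : fr_M fr) : seg e -> fr_M fr := fun _ => m.
  have cinj : forall x y k, c (x - k)%R = c (y - k)%R -> x = y.
    move=> x y k /(congr1 (fun v => v (exist _ d0 d0e))) /=.
    exact: GRing.addIr.
  pose F := fun (be : fr_lam fr) (r : forall al, olt al be -> fr_M fr) =>
    epsilon (inhabits (0 : fr_M fr)%R) (fun x => forall a1 a2 (h1 : olt a1 a2) (h2 : olt a2 be),
       ~ fsat (Phi (c (r a2 h2 - r a1 (olt_trans h1 h2))%R)) (c (x - r a2 h2)%R)).
  pose sq := Fix (@olt_wf (fr_lam fr)) (fun _ => fr_M fr) F.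
  have aE : forall be, sq be = F be (fun y _ => sq y).
    move=> be; rewrite /sq Fix_eq // => x f g H.
    have -> // : f = g.
    apply: functional_extensionality_dep => y.
    apply: functional_extensionality_dep => p; exact: H.
  have key : forall be a1 a2, olt a1 a2 -> olt a2 be ->
      ~ fsat (Phi (c (sq a2 - sq a1)%R)) (c (sq be - sq a2)%R).
    move=> be; rewrite aE /F.
    apply: (epsilon_spec (inhabits (0 : fr_M fr)%R) (fun x => forall a1 a2 (h1 : olt a1 a2) (h2 : olt a2 be),
       ~ fsat (Phi (c (sq a2 - sq a1)%R)) (c (x - sq a2)%R))).
    apply: NNPP => Hno.
    pose G := fun i => [set t | exists2 j, [set y | olt y i] j &
           fsat (Phi (c (sq i - sq j)%R)) (c (t - sq i)%R)].
    pose G2 := fun i j => [set t | fsat (Phi (c (sq i - sq j)%R)) (c (t - sq i)%R)].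
    have sub : [set: fr_M fr] `<=` [set t | exists2 i, [set y | olt y be] i & G i t].
      move=> x _; apply: NNPP => Hx; apply: Hno; exists x => a1 a2 h1 h2 Hs.
      by apply: Hx; exists a2 => //; exists a1.
    have := card_le_trans HM (subset_card_le sub).
    apply: (@union_small _ _ _ G Hreg (@olt_initial _ be)) => i hi.
      apply: (@union_small _ _ _ (G2 i) Hreg (@olt_initial _ i)) => j hj Hl.
      apply: (Hsmall _ _ (HPhi (c (sq i - sq j)%R))).
      apply: card_le_trans Hl _.
      apply: (@le_of_fun _ _ _ _ (fun t => c (t - sq i)%R)) => // x y _ _.
      exact: cinj.
  have [a1 [a2 [a3 [h12 [h23 [_ hsub]]]]]] :=
    H4b e (fun al be => Phi (c (sq be - sq al)%R)) (fun al be _ => (HPhi _).1).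
  apply: (key a3 a1 a2 h12 h23); apply: hsub.
  exact: (HPhi _).2.1.
- move=> H; split=> //.
  have [_ [_ [_ [Htau _]]]] := Hadd.
  have [f [_ finj]] := @le_to_fun _ _ _ Htau.
  have [d0 [_ d0min]] := @min_ex (fr_the fr) (fun _ => True) (f (inr ord0)) I.
  have [x hx] : exists x, olt d0 x.
    have : f (inr ord0) <> f (inr (@Ordinal 3 1 isT)) by move/finj.
    move=> hne.
    have [y [hy1 hy2]] : exists y, y <> d0 /\ True.
      case: (pselect (f (inr ord0) = d0)) => h.
        by exists (f (inr (@Ordinal 3 1 isT))); split => // h'; apply: hne; rewrite h h'.
      by exists (f (inr ord0)).
    exists y; case: (olt_total d0 y) => [//|[h|h]]; first by case: hy1.
    by case: (d0min _ h).
  have [e [d0e emin]] := @min_ex (fr_the fr) (fun y => olt d0 y) x hx.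
  have [a [phi [Hphi Hle]]] := H e (ex_intro _ d0 d0e).
  have segle : [set: seg e -> fr_M fr] #<= [set: fr_M fr].
    apply: (@le_of_fun _ _ _ _ (fun v => v (exist _ d0 d0e))) => // v w _ _ hvw.
    apply: functional_extensionality_dep => -[d hd].
    have hd0 : d = d0.
      case: (olt_total d d0) => [h|[//|h]]; first by case: (d0min _ h).
      by case: (emin _ hd h).
    subst d; by rewrite (Prop_irrelevance hd d0e).
  exact: card_le_trans Hle (card_le_trans (subset_card_le (@subsetT _ _)) segle).
Qed.
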